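(* Let $G$ be a simple connected graph. Then $\gamma(G)\le 2$ (i.e. $G\in\Gamma_{\le 2}$) if and only if $G$ is an induced subgraph of $K_{m,n,o}$ or of $T_n\vee(K_m+K_o)$ for some non-negative integers $m,n,o$.
   Context: For a finite graph $G$ and indeterminates $X_G=\{x_u : u\in V(G)\}$, the generalized Laplacian matrix $L(G,X_G)$ is the $V(G)\times V(G)$ matrix over $\mathbb{Z}[X_G]$ with $(u,u)$-entry $x_u$ and $(u,v)$-entry $-m_{uv}$ for $u\ne v$, $m_{uv}$ being the number of edges between $u$ and $v$. The $i$-th critical ideal $I_i(G,X_G)$ is the ideal of $\mathbb{Z}[X_G]$ generated by all $i\times i$ minors of $L(G,X_G)$ (with $I_i=\langle1\rangle$ for $i<1$, $I_i=\langle 0\rangle$ for $i>|V(G)|$). The algebraic co-rank $\gamma(G)$ is the number of critical ideals of $G$ equal to $\langle 1\rangle$; $\Gamma_{\le 2}$ is the set of simple connected graphs with $\gamma\le 2$. $K_{m,n,o}$ is the complete tripartite graph with parts of sizes $m,n,o$; $T_n$ is the edgeless graph on $n$ vertices; $K_m$ the complete graph on $m$ vertices; $G+H$ is the disjoint union and $G\vee H$ the join (disjoint union plus all edges between $G$ and $H$). *)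

(* Defs.v *)
From Stdlib Require Import ClassicalEpsilon.
From HB Require Import structures.
From mathcomp Require Import all_boot all_order all_algebra.
From mathcomp Require Import mpoly.
Set Implicit Arguments. Unset Strict Implicit. Unset Printing Implicit Defensive.
Import GRing.Theory.
Local Open Scope ring_scope.

Definition propb (P : Prop) : bool :=
  if excluded_middle_informative P then true else false.

Definition simple_graph (T : finType) (e : rel T) : Prop :=
  ssrbool.symmetric e /\ ssrbool.irreflexive e.

Definition connected_graph (T : finType) (e : rel T) : Prop :=
  forall u v : T, connect e u v.

Definition gen_laplacian (N : nat) (e : rel 'I_N) : 'M[{mpoly int[N]}]_N :=
  \matrix_(u, v) (if u == v then 'X_u else - ((e u v : nat)%:R)).

Definition minor (N i : nat) (A : 'M[{mpoly int[N]}]_N)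
  (f g : {ffun 'I_i -> 'I_N}) : {mpoly int[N]} :=
  \det (\matrix_(a, b) A (f a) (g b)).

Definition critical_ideal_trivial (N : nat) (e : rel 'I_N) (i : nat) : Prop :=
  exists c : {ffun {ffun 'I_i -> 'I_N} * {ffun 'I_i -> 'I_N} -> {mpoly int[N]}},
    1 = \sum_(p : {ffun 'I_i -> 'I_N} * {ffun 'I_i -> 'I_N}
             | injectiveb p.1 && injectiveb p.2)
          c p * minor (gen_laplacian e) p.1 p.2.

(* Algebraic co-rank: number of critical ideals I_i, 1 <= i <= N, equal
   to <1>  (I_i = <0> for i > N; indices i < 1 are conventions, not counted). *)
Definition algebraic_corank (N : nat) (e : rel 'I_N) : nat :=
  #|[set i : 'I_N.+1 | (0 < (i : nat))%N && propb (critical_ideal_trivial e i)]|.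

Definition induced_subgraph (N : nat) (e : rel 'I_N) (T : finType) (f : rel T)
  : Prop :=
  exists phi : 'I_N -> T, injective phi /\ forall u v, e u v = f (phi u) (phi v).

Definition part3 (m n o : nat) (x : 'I_m + ('I_n + 'I_o)) : nat :=
  match x with inl _ => 0 | inr (inl _) => 1 | inr (inr _) => 2 end%N.

Definition K3 (m n o : nat) : rel ('I_m + ('I_n + 'I_o)) :=
  fun x y => part3 x != part3 y.

Definition TjoinKK (n m o : nat) : rel ('I_n + ('I_m + 'I_o)) :=
  fun x y =>
    match x, y with
    | inl _, inl _ => false
    | inl _, inr _ => true
    | inr _, inl _ => true
    | inr (inl a), inr (inl b) => a != b
    | inr (inr a), inr (inr b) => a != b
    | inr _, inr _ => false
    end.

(* Main.v *)
Require Import Defs.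
From mathcomp Require Import all_boot all_order all_algebra.
From mathcomp Require Import mpoly.
From mathcomp Require Import ring.
From Stdlib Require Import ClassicalEpsilon.
Set Implicit Arguments. Unset Strict Implicit. Unset Printing Implicit Defensive.
Import GRing.Theory.
Local Open Scope ring_scope.

Lemma det2f (R : comNzRingType) (f : nat -> nat -> R) :
  \det (\matrix_(i < 2, j < 2) f i j) = f 0%N 0%N * f 1%N 1%N - f 0%N 1%N * f 1%N 0%N.
Proof.
rewrite (expand_det_row _ 0) !big_ord_recl big_ord0 /cofactor !det_mx11 /=.
rewrite !mxE /= /bump /= !addn0 !add0n !expr0 ?expr1; ring.
Qed.

Lemma det3f (R : comNzRingType) (f : nat -> nat -> R) :
  \det (\matrix_(i < 3, j < 3) f i j) =
   f 0%N 0%N * f 1%N 1%N * f 2%N 2%N - f 0%N 0%N * f 1%N 2%N * f 2%N 1%N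
 - f 0%N 1%N * f 1%N 0%N * f 2%N 2%N + f 0%N 1%N * f 1%N 2%N * f 2%N 0%N
 + f 0%N 2%N * f 1%N 0%N * f 2%N 1%N - f 0%N 2%N * f 1%N 1%N * f 2%N 0%N.
Proof.
rewrite (expand_det_row _ 0) !big_ord_recl big_ord0 /cofactor /=.
rewrite !(expand_det_row _ 0) !big_ord_recl big_ord0 /cofactor !det_mx11 /=.
rewrite !mxE /= /bump /= !addn0 !add0n !add1n ?addn1 /= !expr0 ?expr1 ?expr2 !big_ord0.
ring.
Qed.

Lemma triv_of_minor N (e : rel 'I_N) i (f g : {ffun 'I_i -> 'I_N}) (s : {mpoly int[N]}) :
  injectiveb f -> injectiveb g -> s * minor (gen_laplacian e) f g = 1 ->
  critical_ideal_trivial e i.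
Proof.
move=> fI gI H; exists [ffun p => if p == (f, g) then s else 0].
rewrite (bigD1 (f, g)) /= ?fI ?gI // ffunE eqxx H big1 ?addr0 //.
by move=> p /andP[_ /negbTE]; rewrite ffunE => ->; rewrite mul0r.
Qed.

Definition cfg N (e : rel 'I_N) k (Fa : nat -> nat -> bool) (v : nat -> 'I_N) :=
  (forall a b, (a < k)%N -> (b < k)%N -> (v a == v b) = (a == b)) /\
  (forall a b, (a < k)%N -> (b < k)%N -> e (v a) (v b) = Fa a b).

Definition Gent N k (Fa : nat -> nat -> bool) (v : nat -> 'I_N) (a b : nat) : {mpoly int[N]} :=
  if (a < k)%N && (b < k)%N then (if a == b then 'X_(v a) else - ((Fa a b : nat)%:R)) else 0.

Lemma vf_inj N k (v : nat -> 'I_N) (r : seq nat) i :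
  (forall a b, (a < k)%N -> (b < k)%N -> (v a == v b) = (a == b)) ->
  all (fun a => a < k)%N r -> uniq r -> size r = i ->
  injectiveb [ffun a : 'I_i => v (nth 0%N r a)].
Proof.
move=> Hv Hr Ur Sr; apply/injectiveP => a b; rewrite !ffunE => /eqP.
rewrite Hv; first last.
- by apply: (allP Hr); apply: mem_nth; rewrite Sr.
- by apply: (allP Hr); apply: mem_nth; rewrite Sr.
rewrite nth_uniq ?Sr // => /eqP H; exact: val_inj.
Qed.

Lemma minor_cfg N (e : rel 'I_N) k Fa v i (r c : seq nat) :
  cfg e k Fa v -> all (fun a => a < k)%N r -> all (fun a => a < k)%N c ->
  size r = i -> size c = i ->
  minor (gen_laplacian e) [ffun a : 'I_i => v (nth 0%N r a)] [ffun a : 'I_i => v (nth 0%N c a)]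
  = \det (\matrix_(a < i, b < i) Gent k Fa v (nth 0%N r a) (nth 0%N c b)).
Proof.
move=> [Hv He] Hr Hc Sr Sc; rewrite /minor; congr (\det _); apply/matrixP => a b.
rewrite !mxE !ffunE /Gent.
have ra : (nth 0%N r a < k)%N by apply: (allP Hr); apply: mem_nth; rewrite Sr.
have cb : (nth 0%N c b < k)%N by apply: (allP Hc); apply: mem_nth; rewrite Sc.
by rewrite ra cb Hv // He.
Qed.

Lemma cfg_triv N (e : rel 'I_N) k Fa v i (r c : seq nat) s :
  cfg e k Fa v -> all (fun a => a < k)%N r -> all (fun a => a < k)%N c ->
  uniq r -> uniq c -> size r = i -> size c = i ->
  s * \det (\matrix_(a < i, b < i) Gent k Fa v (nth 0%N r a) (nth 0%N c b)) = 1 ->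
  critical_ideal_trivial e i.
Proof.
move=> C Hr Hc Ur Uc Sr Sc H.
case: (C) => Hv _.
apply: (triv_of_minor (s := s) (f := [ffun a : 'I_i => v (nth 0%N r a)])
   (g := [ffun a : 'I_i => v (nth 0%N c a)])); try (apply: vf_inj; eauto).
by rewrite (minor_cfg C Hr Hc Sr Sc).
Qed.

Definition P4a (a b : nat) : bool :=
  match a, b with 0,1 | 1,0 | 1,2 | 2,1 | 2,3 | 3,2 => true | _, _ => false end%N.

Lemma P4_I3 N (e : rel 'I_N) v : cfg e 4 P4a v -> critical_ideal_trivial e 3.
Proof.
move=> C; apply: (cfg_triv (r := [:: 0; 1; 2]%N) (c := [:: 1; 2; 3]%N) (s := -1)) C _ _ _ _ _ _ _ => //.
rewrite (det3f (fun a b => Gent _ _ _ (nth 0%N _ a) (nth 0%N _ b))) /Gent /=.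
ring.
Qed.

Lemma propbP (P : Prop) : reflect P (propb P).
Proof. by rewrite /propb; case: excluded_middle_informative => H; constructor. Qed.

Definition triv123 N (e : rel 'I_N) :=
  [/\ critical_ideal_trivial e 1, critical_ideal_trivial e 2 & critical_ideal_trivial e 3].

Lemma triv123_corank N (e : rel 'I_N) : (3 <= N)%N -> triv123 e -> (2 < algebraic_corank e)%N.
Proof.
move=> HN [T1 T2 T3]; apply/card_gt2P.
exists (inord 1), (inord 2), (inord 3); rewrite !inE.
have h1 : (1 <= N)%N by apply: leq_trans HN.
have h2 : (2 <= N)%N by apply: leq_trans HN.
rewrite !inordK ?ltnS //; split; first by split; apply/propbP.
by split; apply/eqP => /(congr1 val) /=; rewrite !inordK ?ltnS.
Qed.

Lemma cfg_N N (e : rel 'I_N) k Fa v : cfg e k Fa v -> (k <= N)%N.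
Proof.
case=> Hv _.
have inj : injective (fun a : 'I_k => v a).
  by move=> a b /eqP; rewrite Hv // => /eqP; apply: val_inj.
by have := leq_card _ inj; rewrite !card_ord.
Qed.

Ltac certI C i r c :=
  first [ apply: (cfg_triv (i := i) (r := r) (c := c) (s := 1) C) => //;
          first [ rewrite det_mx11 mxE /Gent /=
                | rewrite (det2f (fun a b => Gent _ _ _ (nth 0%N _ a) (nth 0%N _ b))) /Gent /=
                | rewrite (det3f (fun a b => Gent _ _ _ (nth 0%N _ a) (nth 0%N _ b))) /Gent /=];
          ring
        | apply: (cfg_triv (i := i) (r := r) (c := c) (s := -1) C) => //;
          first [ rewrite det_mx11 mxE /Gent /=
                | rewrite (det2f (fun a b => Gent _ _ _ (nth 0%N _ a) (nth 0%N _ b))) /Gent /=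
                | rewrite (det3f (fun a b => Gent _ _ _ (nth 0%N _ a) (nth 0%N _ b))) /Gent /=];
          ring ].

Lemma P4_triv N (e : rel 'I_N) v : cfg e 4 P4a v -> triv123 e.
Proof.
move=> C; split.
- certI C 1%N [:: 0%N] [:: 1%N].
- certI C 2%N [:: 0; 1]%N [:: 1; 2]%N.
- certI C 3%N [:: 0; 1; 2]%N [:: 1; 2; 3]%N.
Qed.

Definition symc (f : nat -> nat -> bool) a b := f a b || f b a.

Definition F1e (a b : nat) : bool :=
  match a, b with 0,4 | 1,4 | 2,3 | 2,4 | 3,4 => true | _, _ => false end%N.
Definition F2e (a b : nat) : bool :=
  match a, b with 0,4 | 1,3 | 1,4 | 2,3 | 2,4 | 3,4 => true | _, _ => false end%N.
Definition F3e (a b : nat) : bool :=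
  match a, b with 0,3 | 0,4 | 1,2 | 1,3 | 1,4 | 2,3 | 2,4 | 3,4 => true | _, _ => false end%N.
Definition K2211a (a b : nat) : bool :=
  (a != b) && ~~ ((a == 0%N) && (b == 1%N) || (a == 1%N) && (b == 0%N)
                 || (a == 2%N) && (b == 3%N) || (a == 3%N) && (b == 2%N)).

Lemma F1_triv N (e : rel 'I_N) v : cfg e 5 (symc F1e) v -> triv123 e.
Proof.
move=> C; split.
- certI C 1%N [:: 0%N] [:: 4%N].
- certI C 2%N [:: 0; 4]%N [:: 4; 1]%N.
- certI C 3%N [:: 0; 2; 4]%N [:: 4; 3; 1]%N.
Qed.

Lemma F2_triv N (e : rel 'I_N) v : cfg e 5 (symc F2e) v -> triv123 e.
Proof.
move=> C; split.
- certI C 1%N [:: 0%N] [:: 4%N].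
- certI C 2%N [:: 0; 4]%N [:: 4; 1]%N.
- certI C 3%N [:: 0; 1; 3]%N [:: 4; 3; 2]%N.
Qed.

Lemma F3_triv N (e : rel 'I_N) v : cfg e 5 (symc F3e) v -> triv123 e.
Proof.
move=> C; split.
- certI C 1%N [:: 0%N] [:: 3%N].
- certI C 2%N [:: 0; 3]%N [:: 3; 1]%N.
- certI C 3%N [:: 0; 1; 3]%N [:: 0; 2; 4]%N.
Qed.

Lemma K2211_triv N (e : rel 'I_N) v : cfg e 6 K2211a v -> triv123 e.
Proof.
move=> C; split.
- certI C 1%N [:: 0%N] [:: 2%N].
- certI C 2%N [:: 0; 2]%N [:: 2; 1]%N.
- certI C 3%N [:: 0; 2; 4]%N [:: 1; 3; 5]%N.
Qed.

Definition okb N (e : rel 'I_N) k (Fa : nat -> nat -> bool) (v : nat -> 'I_N) :=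
  all (fun i => all (fun j => (i < j)%N ==>
     ((e (v i) (v j) == Fa i j) && (Fa i j || (v i != v j)))) (iota 0 k)) (iota 0 k).

Definition symck k (Fa : nat -> nat -> bool) :=
  all (fun i => all (fun j => (Fa i j == Fa j i)) (iota 0 k) && ~~ Fa i i) (iota 0 k).

Lemma mk_cfg N (e : rel 'I_N) k Fa v :
  simple_graph e -> symck k Fa -> okb e k Fa v -> cfg e k Fa v.
Proof.
move=> [Es Ei] Sk Ok.
have key : forall i j, (i < j)%N -> (j < k)%N ->
    e (v i) (v j) = Fa i j /\ (Fa i j || (v i != v j)).
  move=> i j ij jk.
  have ik : (i < k)%N by apply: ltn_trans jk.
  move/allP: Ok => /(_ i); rewrite mem_iota add0n ik => /(_ isT) /allP /(_ j).
  by rewrite mem_iota add0n jk ij => /(_ isT) /andP [/eqP -> ->].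
have sk : forall i j, (i < k)%N -> (j < k)%N -> Fa i j = Fa j i /\ Fa i i = false.
  move=> i j ik jk.
  move/allP: Sk => /(_ i); rewrite mem_iota add0n ik => /(_ isT) /andP [/allP H /negbTE ->].
  by move: (H j); rewrite mem_iota add0n jk => /(_ isT) /eqP.
have nq : forall i j, (i < j)%N -> (j < k)%N -> (v i == v j) = false.
  move=> i j ij jk; have [E1 E2] := key i j ij jk.
  apply/negbTE; case: (Fa i j) E1 E2 => // E1 _.
  by apply/eqP => E; move: E1; rewrite E Ei.
split=> a b ak bk; case: (ltngtP a b) => ab.
- by rewrite nq.
- by rewrite eq_sym nq.
- by rewrite ab !eqxx.
- by case: (key a b ab bk).
- by rewrite Es; case: (key b a ab ak) => -> _; case: (sk a b ak bk).
- by rewrite ab Ei; case: (sk b b bk bk).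
Qed.

Lemma forb N (e : rel 'I_N) k Fa v :
  (cfg e k Fa v -> triv123 e) -> (3 <= k)%N ->
  simple_graph e -> (algebraic_corank e <= 2)%N -> symck k Fa -> okb e k Fa v -> False.
Proof.
move=> T k3 S Hc Sk Ok.
have C := mk_cfg S Sk Ok.
have := triv123_corank (leq_trans k3 (cfg_N C)) (T C).
by rewrite ltnNge Hc.
Qed.

Ltac ctr e Es Ei :=
  match goal with
  | H : is_true (e ?x ?x) |- _ => by rewrite Ei in H
  | H1 : is_true (e ?x ?y), H2 : is_true (~~ e ?x ?y) |- _ => by rewrite H1 in H2
  | H1 : is_true (e ?x ?y), H2 : is_true (~~ e ?y ?x) |- _ => by rewrite Es H1 in H2
  end.
Ltac neqt e Es Ei := apply/eqP => E; subst; ctr e Es Ei.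
Ltac lit e Es Ei := first [ done | by rewrite Es | by rewrite eq_sym | neqt e Es Ei ].
Ltac okt e Es Ei := rewrite /okb /= ?eqb_id ?eqbF_neg /=; repeat (apply/andP; split); lit e Es Ei.

Lemma noP4 N (e : rel 'I_N) : simple_graph e -> (algebraic_corank e <= 2)%N ->
  forall a b c d, e a b -> e b c -> e c d -> ~~ e a c -> ~~ e b d -> ~~ e a d -> False.
Proof.
move=> S Hc a b c d H1 H2 H3 H4 H5 H6.
apply: (@forb N e 4 P4a (fun i => nth a [:: a; b; c; d] i) (@P4_triv N e _) isT S Hc isT).
case: S => Es Ei; okt e Es Ei.
Qed.

Lemma noF1 N (e : rel 'I_N) : simple_graph e -> (algebraic_corank e <= 2)%N ->
  forall w x y p q, e w p -> e w q -> e w x -> e w y -> e x y ->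
  ~~ e p q -> ~~ e p x -> ~~ e p y -> ~~ e q x -> ~~ e q y -> p != q -> False.
Proof.
move=> S Hc w x y p q H1 H2 H3 H4 H5 H6 H7 H8 H9 H10 H11.
apply: (@forb N e 5 (symc F1e) (fun i => nth p [:: p; q; x; y; w] i) (@F1_triv N e _) isT S Hc isT).
case: S => Es Ei; okt e Es Ei.
Qed.

Lemma noF2 N (e : rel 'I_N) : simple_graph e -> (algebraic_corank e <= 2)%N ->
  forall w x m y p, e w p -> e w x -> e w y -> e w m -> e x m -> e y m ->
  ~~ e x y -> ~~ e p x -> ~~ e p y -> ~~ e p m -> x != y -> False.
Proof.
move=> S Hc w x m y p H1 H2 H3 H4 H5 H6 H7 H8 H9 H10 H11.
apply: (@forb N e 5 (symc F2e) (fun i => nth p [:: p; x; y; m; w] i) (@F2_triv N e _) isT S Hc isT).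
case: S => Es Ei; okt e Es Ei.
Qed.

Lemma noF3 N (e : rel 'I_N) : simple_graph e -> (algebraic_corank e <= 2)%N ->
  forall s t x y p, e s t -> e s p -> e s x -> e s y -> e t p -> e t x -> e t y -> e x y ->
  ~~ e p x -> ~~ e p y -> False.
Proof.
move=> S Hc s t x y p H1 H2 H3 H4 H5 H6 H7 H8 H9 H10.
apply: (@forb N e 5 (symc F3e) (fun i => nth p [:: p; x; y; s; t] i) (@F3_triv N e _) isT S Hc isT).
case: S => Es Ei; okt e Es Ei.
Qed.

Lemma noK2211 N (e : rel 'I_N) : simple_graph e -> (algebraic_corank e <= 2)%N ->
  forall p q r s u v, e p r -> e p s -> e p u -> e p v -> e q r -> e q s -> e q u -> e q v ->
  e r u -> e r v -> e s u -> e s v -> e u v -> ~~ e p q -> ~~ e r s -> p != q -> r != s -> False.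
Proof.
move=> S Hc p q r s u v H1 H2 H3 H4 H5 H6 H7 H8 H9 H10 H11 H12 H13 H14 H15 H16 H17.
apply: (@forb N e 6 K2211a (fun i => nth p [:: p; q; r; s; u; v] i) (@K2211_triv N e _) isT S Hc isT).
case: S => Es Ei; okt e Es Ei.
Qed.


Definition psi N (h : 'I_N -> 'F_2) : {mpoly int[N]} -> 'F_2 := mmap (intr : int -> 'F_2) h.

Lemma rank2_not_triv N (e : rel 'I_N) (h : 'I_N -> 'F_2)
   (al : 'I_N -> 'I_2 -> 'F_2) (be : 'I_2 -> 'I_N -> 'F_2) :
  (forall u v, psi h (gen_laplacian e u v) = \sum_(t < 2) al u t * be t v) ->
  forall i, (2 < i)%N -> ~ critical_ideal_trivial e i.
Proof.
move=> HL i Hi [c Hc].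
have := congr1 (psi h) Hc; rewrite /psi in HL *.
rewrite rmorph1 rmorph_sum /= big1 ?(@oner_eq0 'F_2) //.
move=> [f g] _ /=; rewrite rmorphM /= /minor -det_map_mx.
set A := (\matrix_(a < i, t < 2) al (f a) t).
set B := (\matrix_(t < 2, b < i) be t (g b)).
have -> : map_mx (psi h) (\matrix_(a, b) gen_laplacian e (f a) (g b)) = A *m B.
  by apply/matrixP => a b; have HL2 := HL (f a) (g b); rewrite mxE in HL2; rewrite !mxE /psi HL2; apply: eq_bigr => t _; rewrite !mxE.
apply/eqP; rewrite mulf_eq0; apply/orP; right.
apply: contraT => Hd.
have U : A *m B \in unitmx by rewrite unitmxE unitfE.
have := mxrank_unit U; move=> Hr.
have := mxrankM_maxl A B; rewrite Hr => H1.
have := rank_leq_col A => H2.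
have := leq_trans H1 H2. by rewrite leqNgt Hi.
Qed.

Lemma corank_le2 N (e : rel 'I_N) :
  (forall i, (2 < i)%N -> ~ critical_ideal_trivial e i) -> (algebraic_corank e <= 2)%N.
Proof.
move=> H; rewrite /algebraic_corank.
apply: (@leq_trans #|[set (inord 1 : 'I_N.+1); inord 2]|); last by rewrite cards2; case: (_ != _).
apply: subset_leq_card; apply/subsetP => x; rewrite !inE => /andP[x0 /propbP Tx].
have : (x <= 2)%N by rewrite leqNgt; apply/negP => /H; apply.
have xN := ltn_ord x.
rewrite leq_eqVlt ltnS leq_eqVlt ltnS leqn0 (negbTE (lt0n_neq0 x0)) orbF.
case/orP => /eqP xv.
- by apply/orP; right; apply/eqP/val_inj; rewrite /= inordK // -xv.
- by apply/orP; left; apply/eqP/val_inj; rewrite /= inordK // -xv.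
Qed.

Lemma F2neg (b : bool) : - (b%:R : 'F_2) = b%:R.
Proof. case: b => /=; last by rewrite oppr0. by apply/val_inj. Qed.

Lemma psiL N (e : rel 'I_N) h u v :
  psi h (gen_laplacian e u v) = if u == v then h u else (e u v)%:R.
Proof.
rewrite mxE /psi; case: eqP => _.
- by rewrite mmapX mmap1U.
- by rewrite rmorphN rmorph_nat F2neg.
Qed.

Lemma F2_11 : (1 + 1 : 'F_2) = 0. Proof. by apply/val_inj. Qed.

Lemma K3_le2 N (e : rel 'I_N) m n o (phi : 'I_N -> 'I_m + ('I_n + 'I_o)) :
  injective phi -> (forall u v, e u v = K3 (phi u) (phi v)) ->
  (algebraic_corank e <= 2)%N.
Proof.
move=> Iphi He; apply: corank_le2.
pose col u := part3 (phi u).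
apply: (@rank2_not_triv N e (fun _ => 0)
   (fun u t => if t == 0 then ((col u != 1)%N : nat)%:R else ((col u != 0)%N : nat)%:R)
   (fun t v => if t == 0 then ((col v != 0)%N : nat)%:R else ((col v != 1)%N : nat)%:R)).
move=> u v; rewrite psiL big_ord_recr big_ord_recr big_ord0 /= add0r He.
have -> : (if u == v then 0 else (K3 (phi u) (phi v) : nat)%:R) = (K3 (phi u) (phi v) : nat)%:R :> 'F_2.
  by case: eqP => // ->; rewrite /K3 eqxx.
rewrite /K3 /col.
case: (phi u) => [a|[a|a]]; case: (phi v) => [b|[b|b]] /=;
  rewrite ?mulr0 ?mulr1 ?mul0r ?mul1r ?addr0 ?add0r ?F2_11 //.
Qed.

Lemma TKK_le2 N (e : rel 'I_N) m n o (phi : 'I_N -> 'I_n + ('I_m + 'I_o)) :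
  injective phi -> (forall u v, e u v = TjoinKK (phi u) (phi v)) ->
  (algebraic_corank e <= 2)%N.
Proof.
move=> Iphi He; apply: corank_le2.
pose col u := match phi u with inl _ => 0 | inr (inl _) => 1 | inr (inr _) => 2 end%N.
apply: (@rank2_not_triv N e (fun u => ((col u != 0)%N : nat)%:R)
   (fun u t => if t == 0 then ((col u != 2)%N : nat)%:R else ((col u != 1)%N : nat)%:R)
   (fun t v => if t == 0 then ((col v != 2)%N : nat)%:R else ((col v != 1)%N : nat)%:R)).
move=> u v; rewrite psiL big_ord_recr big_ord_recr big_ord0 /= add0r He /col.
case: eqP => [<-|/eqP uv].
  by case: (phi u) => [a|[a|a]] /=; rewrite ?mulr0 ?mulr1 ?mul0r ?mul1r ?addr0 ?add0r ?F2_11.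
have : phi u != phi v by apply: contra uv => /eqP /Iphi ->.
case: (phi u) => [a|[a|a]]; case: (phi v) => [b|[b|b]] /= ab;
  rewrite ?mulr0 ?mulr1 ?mul0r ?mul1r ?addr0 ?add0r ?F2_11 //.
- by move: ab; rewrite /= (inj_eq (@inr_inj _ _)) (inj_eq (@inl_inj _ _)) => ->.
- by move: ab; rewrite /= !(inj_eq (@inr_inj _ _)) => ->.
Qed.


Ltac gl Es := first [ done | by rewrite Es | by rewrite eq_sym ].

Lemma diam N (e : rel 'I_N) : simple_graph e -> (algebraic_corank e <= 2)%N ->
  connected_graph e -> forall u v, u != v -> ~~ e u v -> exists w, e u w && e w v.
Proof.
move=> S Hc Conn u v uv nuv; have [Es Ei] := S.
pose D z := (z == u) || e u z || [exists w, e u w && e w z].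
suff: D v by rewrite /D eq_sym (negbTE uv) (negbTE nuv) /= => /existsP.
have cl : forall x y, e x y -> D x -> D y.
  move=> x y exy; rewrite /D; case/orP => [/orP [/eqP xu | eux] | /existsP [w /andP [euw ewx]]].
  - by rewrite -xu exy orbT.
  - by apply/orP; right; apply/existsP; exists x; rewrite eux.
  - case: (boolP (e u x)) => eux.
      by apply/orP; right; apply/existsP; exists x; rewrite eux.
    case: (boolP (y == u)) => //= yu; case: (boolP (e u y)) => //= euy.
    apply/existsP; case: (boolP (e w y)) => ewy; first by exists w; rewrite euw.
    by exfalso; apply: (noP4 S Hc (a:=u) (b:=w) (c:=x) (d:=y)).
have [p pth ->] := connectP (Conn u v).
have Du : D u by rewrite /D eqxx.
have key : forall q x, D x -> path e x q -> D (last x q).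
  by elim=> //= y q IH x Dx /andP [exy pq]; apply: IH => //; apply: cl Dx.
exact: key.
Qed.

Lemma caseB N (e : rel 'I_N) : simple_graph e -> (algebraic_corank e <= 2)%N ->
  connected_graph e -> forall a b c, e a b -> ~~ e a c -> ~~ e b c -> c != a -> c != b ->
  induced_subgraph e (@TjoinKK N N N).
Proof.
move=> S Hc Conn a b c eab nac nbc ca cb; have [Es Ei] := S.
have P4 := noP4 S Hc; have F1 := noF1 S Hc; have F2 := noF2 S Hc; have F3 := noF3 S Hc.
have D := diam S Hc Conn.
have ac : a != c by rewrite eq_sym.
have [w /andP [eaw ewc]] := D a c ac nac.
have ewb : e w b.
  apply/negPn/negP => nwb.
  by apply: (P4 b a w c); gl Es.
have L1 : forall x, x != a -> x != c -> ~~ e x a -> ~~ e x c -> False.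
  move=> x xa xc nxa nxc.
  case: (boolP (e x b)) => exb.
    case: (boolP (e w x)) => ewx.
      by apply: (F2 w a b x c); gl Es.
    by apply: (P4 x b w c); gl Es.
  case: (boolP (e w x)) => ewx.
    by apply: (F1 w a b c x); gl Es.
  have [z /andP [exz eza]] := D x a xa nxa.
  case: (boolP (e z c)) => ezc.
    have ezb : e z b.
      apply/negPn/negP => nzb.
      by apply: (P4 b a z c); gl Es.
    by apply: (F1 z a b c x); gl Es.
  case: (boolP (e z w)) => ezw.
    by apply: (P4 x z w c); gl Es.
  by apply: (P4 x z a w); gl Es.
pose inS x := e x a && e x c.
pose inA x := (x == a) || (e x a && ~~ e x c).
pose inB x := (x == c) || (e x c && ~~ e x a).
have cls : forall x, ~~ inS x -> ~~ inA x -> inB x.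
  move=> x; rewrite /inS /inA /inB negb_and negb_or => nS /andP [xa nA].
  case: (boolP (e x c)) => exc.
    by case/orP: nS => [nxa | nxc]; [rewrite nxa orbT | rewrite exc in nxc].
  case: (boolP (x == c)) => // xc.
  case: (boolP (e x a)) => exa; first by rewrite exa exc in nA.
  by exfalso; apply: (L1 x).
have SA : forall s x, inS s -> inA x -> e s x.
  move=> s x /andP [esa esc] /orP [/eqP -> // | /andP [exa nxc]].
  apply/negPn/negP => nsx.
  by apply: (P4 x a s c); gl Es.
have SB : forall s y, inS s -> inB y -> e s y.
  move=> s y /andP [esa esc] /orP [/eqP -> // | /andP [eyc nya]].
  apply/negPn/negP => nsy.
  by apply: (P4 y c s a); gl Es.
have SS : forall s t, inS s -> inS t -> ~~ e s t.
  move=> s t Ss St; apply/negP => est.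
  have esb : e s b by apply: SA Ss _; rewrite /inA Es eab nbc orbT.
  have etb : e t b by apply: SA St _; rewrite /inA Es eab nbc orbT.
  case/andP: Ss => esa esc; case/andP: St => eta etc.
  by apply: (F3 s t a b c); gl Es.
have AA : forall x y, inA x -> inA y -> x != y -> e x y.
  move=> x y /orP [/eqP xa | /andP [exa nxc]] /orP [/eqP ya | /andP [eya nyc]] xy.
  - by rewrite xa ya eqxx in xy.
  - by rewrite xa Es.
  - by rewrite ya.
  apply/negPn/negP => nxy.
  have ewx : e w x by apply/negPn/negP => nwx; apply: (P4 x a w c); gl Es.
  have ewy : e w y by apply/negPn/negP => nwy; apply: (P4 y a w c); gl Es.
  by apply: (F2 w x a y c); gl Es.
have BB : forall x y, inB x -> inB y -> x != y -> e x y.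
  move=> x y /orP [/eqP xc | /andP [exc nxa]] /orP [/eqP yc | /andP [eyc nya]] xy.
  - by rewrite xc yc eqxx in xy.
  - by rewrite xc Es.
  - by rewrite yc.
  apply/negPn/negP => nxy.
  have ewx : e w x by apply/negPn/negP => nwx; apply: (P4 x c w a); gl Es.
  have ewy : e w y by apply/negPn/negP => nwy; apply: (P4 y c w a); gl Es.
  by apply: (F2 w x c y a); gl Es.
have AB : forall x y, inA x -> inB y -> ~~ e x y.
  move=> x y /orP [/eqP -> | /andP [exa nxc]] /orP [/eqP -> | /andP [eyc nya]] //.
  - by rewrite Es.
  - apply/negP => exy.
    by apply: (P4 a x y c); gl Es.
pose phi x : 'I_N + ('I_N + 'I_N) :=
  if inS x then inl x else if inA x then inr (inl x) else inr (inr x).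
exists phi; split.
  move=> x y; rewrite /phi.
  by case: (inS x); case: (inS y); case: (inA x); case: (inA y) => E; case: E.
move=> u v; case: (eqVneq u v) => [<-|uv].
  by rewrite Ei /phi; case: (inS u); case: (inA u) => //=; rewrite eqxx.
rewrite /phi.
case: (boolP (inS u)) => Su; case: (boolP (inS v)) => Sv /=.
- by apply/negbTE; apply: SS.
- case: (boolP (inA v)) => Av /=; first by apply: SA.
  by apply: SB => //; apply: cls.
- case: (boolP (inA u)) => Au /=; first by rewrite Es; apply: SA.
  by rewrite Es; apply: SB => //; apply: cls.
case: (boolP (inA u)) => Au; case: (boolP (inA v)) => Av /=.
- by rewrite uv; apply: AA.
- by apply/negbTE; apply: AB => //; apply: cls.
- by apply/negbTE; rewrite Es; apply: AB => //; apply: cls.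
- by rewrite uv; apply: BB => //; apply: cls.
Qed.

Lemma caseA N (e : rel 'I_N) : simple_graph e -> (algebraic_corank e <= 2)%N ->
  (forall a b c, e a b -> c != a -> c != b -> e a c || e b c) ->
  exists m n o : nat,
     induced_subgraph e (@K3 m n o) \/ induced_subgraph e (@TjoinKK n m o).
Proof.
move=> S Hc NC; have [Es Ei] := S.
have TR : forall x y z, x != y -> ~~ e x y -> y != z -> ~~ e y z -> x != z -> ~~ e x z.
  move=> x y z xy nxy yz nyz xz; apply/negP => exz.
  have := NC x z y exz; rewrite eq_sym xy yz => /(_ isT isT).
  by rewrite (negbTE nxy) Es (negbTE nyz).
pose inC p x := (x == p) || ~~ e x p.
have Cn : forall p x, inC p x = ~~ e x p.
  by move=> p x; rewrite /inC; case: eqP => // ->; rewrite Ei.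
have C1 : forall p x y, inC p x -> inC p y -> x != y -> ~~ e x y.
  move=> p x y; rewrite !Cn => nxp nyp xy.
  case: (eqVneq x p) => [xp | xp]; first by rewrite xp Es.
  case: (eqVneq y p) => [yp | yp]; first by rewrite yp.
  by apply: (TR x p y xp nxp _ _ xy); [rewrite eq_sym | rewrite Es].
have C2 : forall p x y, inC p x -> ~~ inC p y -> e x y.
  move=> p x y; rewrite !Cn negbK => nxp eyp.
  case: (eqVneq x p) => [-> | xp]; first by rewrite Es.
  apply/negPn/negP => nxy.
  have yp : y != p by apply/eqP => E; rewrite E Ei in eyp.
  have xy : x != y by apply/eqP => E; rewrite E eyp in nxp.
  have := TR y x p; rewrite eq_sym xy Es nxy xp nxp yp => /(_ isT isT isT isT isT).
  by rewrite eyp.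
case: (boolP [exists p, exists q, exists r, exists s,
          [&& p != q, ~~ e p q, r != s, ~~ e r s & e p r]]).
  move/existsP => [p /existsP [q /existsP [r /existsP [s /and5P [pq npq rs nrs epr]]]]].
  exists N, N, N; left.
  pose phi x : 'I_N + ('I_N + 'I_N) :=
    if inC p x then inl x else if inC r x then inr (inl x) else inr (inr x).
  exists phi; split.
    move=> x y; rewrite /phi.
    by case: (inC p x); case: (inC p y); case: (inC r x); case: (inC r y) => E; case: E.
  have Cpp : inC p p by rewrite /inC eqxx.
  have Cpq : inC p q by rewrite /inC Es npq orbT.
  have Crr : inC r r by rewrite /inC eqxx.
  have Crs : inC r s by rewrite /inC Es nrs orbT.
  have nCrp : ~~ inC r p.
    by rewrite /inC negb_or negbK epr andbT; apply/eqP => E; rewrite E Ei in epr.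
  have esp : e s p by apply: (C2 r).
  have nCps : ~~ inC p s.
    by rewrite /inC negb_or negbK esp andbT; apply/eqP => E; rewrite E Ei in esp.
  have nCpr : ~~ inC p r.
    by rewrite /inC negb_or negbK Es epr andbT; apply/eqP => E; rewrite E Ei in epr.
  move=> u v; case: (eqVneq u v) => [<-|uv].
    by rewrite Ei /phi /K3; case: (inC p u); case: (inC r u); rewrite eqxx.
  rewrite /phi /K3.
  case: (boolP (inC p u)) => Pu; case: (boolP (inC p v)) => Pv /=.
  - by apply/negbTE; apply: (C1 p).
  - by rewrite (C2 p u v) //; case: (inC r v).
  - by rewrite Es (C2 p v u) //; case: (inC r u).
  case: (boolP (inC r u)) => Ru; case: (boolP (inC r v)) => Rv /=.
  - by apply/negbTE; apply: (C1 r).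
  - by apply: (C2 r).
  - by rewrite Es; apply: (C2 r).
  apply/negbTE/negP => euv.
  apply: (noK2211 S Hc (p:=p) (q:=q) (r:=r) (s:=s) (u:=u) (v:=v)) => //;
    first [ by rewrite Es
          | by apply: (C2 p)
          | by apply: (C2 r)
          | by rewrite Es; apply: (C2 p)
          | by rewrite Es; apply: (C2 r) ].
rewrite negb_exists => /forallP NK.
case: (boolP [exists p, exists q, (p != q) && ~~ e p q]).
  move/existsP => [p /existsP [q /andP [pq npq]]].
  exists N, N, N; right.
  pose phi x : 'I_N + ('I_N + 'I_N) := if inC p x then inl x else inr (inl x).
  exists phi; split.
    by move=> x y; rewrite /phi; case: (inC p x); case: (inC p y) => E; case: E.
  move=> u v; case: (eqVneq u v) => [<-|uv].
    by rewrite Ei /phi /TjoinKK; case: (inC p u); rewrite ?eqxx.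
  rewrite /phi /TjoinKK.
  case: (boolP (inC p u)) => Pu; case: (boolP (inC p v)) => Pv /=.
  - by apply/negbTE; apply: (C1 p).
  - by apply: (C2 p).
  - by rewrite Es; apply: (C2 p).
  rewrite uv; apply/negPn/negP => nuv.
  move: (NK p); rewrite negb_exists => /forallP /(_ q).
  rewrite negb_exists => /forallP /(_ u); rewrite negb_exists => /forallP /(_ v).
  rewrite pq npq uv nuv /=.
  by rewrite (C2 p p u) // /inC eqxx.
rewrite negb_exists => /forallP NP.
exists N, N, N; right.
exists (fun x => (inr (inl x) : 'I_N + ('I_N + 'I_N))); split.
  by move=> x y [].
move=> u v; rewrite /TjoinKK; case: (eqVneq u v) => [<-|uv]; first by rewrite Ei.
apply/negPn/negP => nuv.
by move: (NP u); rewrite negb_exists => /forallP /(_ v); rewrite uv nuv.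
Qed.

Theorem theorem4p2 (N : nat) (e : rel 'I_N) :
  simple_graph e -> connected_graph e ->
  ((algebraic_corank e <= 2)%N <->
   exists m n o : nat,
     induced_subgraph e (@K3 m n o) \/ induced_subgraph e (@TjoinKK n m o)).
Proof.
move=> S Conn; split.
- move=> Hc.
  case: (boolP [exists a, exists b, exists c, [&& e a b, ~~ e a c, ~~ e b c, c != a & c != b]]).
    move/existsP => [a /existsP [b /existsP [c /and5P [eab nac nbc ca cb]]]].
    by exists N, N, N; right; apply: (caseB S Hc Conn eab nac nbc ca cb).
  rewrite negb_exists => /forallP H; apply: (caseA S Hc) => a b c eab ca cb.
  move: (H a); rewrite negb_exists => /forallP /(_ b); rewrite negb_exists => /forallP /(_ c).
  rewrite eab ca cb /= !andbT negb_and !negbK.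
  by [].
- move=> [m [n [o [[phi [Iphi He]] | [phi [Iphi He]]]]]].
  + exact: (K3_le2 Iphi He).
  + exact: (TKK_le2 Iphi He).
Qed.
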